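(* Let $G$ be a finite multigraph (no loops), let $\ell \geq 4$ be an integer, let $s$ be a vertex of $G$, and let $A \subsetneq V(G)$ with $s \notin A$ be such that $\lambda_G(x,y) \geq \ell$ for any two distinct $x,y\in A$ and such that no edge of $G$ has both endvertices outside $A$. Assume $\deg(s) \geq 4$, let $I_1$ and $I_2$ be two distinct maximal independent sets in $L(G,s,\tau_A)$, each of size at least $2$, and let $D_1, D_2$ be dangerous sets such that for $i=1,2$ and every edge $sv \in I_i$ we have $v \in D_i$. Then: (1) $|I_1 \cap I_2| \leq 1$; (2) if $|I_1 \cap I_2| = 1$ and $I_1 \cup I_2 \neq V(L(G,s,\tau_A))$, then $\ell$ is odd.
   Context: $\lambda_G(x,y)$ is the maximum number of pairwise edge-disjoint $x$–$y$ paths in $G$; $\delta_G(X)$ is the set of edges with exactly one endvertex in $X$. Lifting two distinct edges $sx,sy$ means deleting them and adding a new edge $xy$. The target function $\tau_A$ assigns $\ell$ to pairs of vertices both in $A$ and $0$ otherwise; a pair of edges at $s$ is $\tau_A$-admissible if after lifting them the new graph $G'$ satisfies $\lambda_{G'}(x,y)\ge\tau_A(x,y)$ for all distinct $x,y\in V(G)\setminus\{s\}$. The lifting graph $L(G,s,\tau_A)$ has as vertices the edges incident with $s$, two being adjacent iff they form a $\tau_A$-admissible pair. A set $D\subseteq V(G)\setminus\{s\}$ is dangerous if both $D$ and $V(G)\setminus(D\cup\{s\})$ contain vertices of $A$ and $|\delta_G(D)|\le \ell+1$. *)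

(* Defs.v *)
From mathcomp Require Import all_boot.
Set Implicit Arguments. Unset Strict Implicit. Unset Printing Implicit Defensive.

(* A finite multigraph on the finite vertex type V is an edge list
   G : seq (V * V); the edges are the indices i : 'I_(size G), and edge i
   joins (edge G i).1 and (edge G i).2.  Parallel edges are distinct
   list entries. The vertex set of the graph is all of V. *)

Section Graphs.
Variable V : finType.
Implicit Types (G : seq (V * V)) (x y s : V).

Definition edge G (i : 'I_(size G)) : V * V := tnth (in_tuple G) i.

Definition loopless G := all (fun e : V * V => e.1 != e.2) G.

Definition joins (e : V * V) u v :=
  ((e.1 == u) && (e.2 == v)) || ((e.1 == v) && (e.2 == u)).

(* es is an x-y path: there are pairwise distinct vertices
   x = v_0, v_1, ..., v_m = y (vs = [v_1; ...; v_m]) such that the k-th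
   edge of es joins v_k and v_(k+1). *)
Definition is_path G x y (es : seq 'I_(size G)) : Prop :=
  exists vs : seq V,
    [/\ size vs = size es, last x vs = y, uniq (x :: vs) &
        all (fun t => joins (edge t.1) t.2.1 t.2.2) (zip es (zip (x :: vs) vs))].

Definition lambda_ge G x y (k : nat) : Prop :=
  exists ps : seq (seq 'I_(size G)),
    [/\ size ps = k,
        forall p, p \in ps -> is_path x y p &
        forall i j, i < j < k ->
          forall e, e \in nth [::] ps i -> e \notin nth [::] ps j].

Definition tau (A : {set V}) (l : nat) x y : nat :=
  if (x \in A) && (y \in A) then l else 0.

Definition incident s (e : V * V) := (e.1 == s) || (e.2 == s).

Definition other s (e : V * V) : V := if e.1 == s then e.2 else e.1.

Definition lift G s (i j : 'I_(size G)) : seq (V * V) :=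
  [seq edge k | k <- enum 'I_(size G) & (k != i) && (k != j)]
    ++ [:: (other s (edge i), other s (edge j))].

Definition admissible G s (A : {set V}) (l : nat) (i j : 'I_(size G)) : Prop :=
  [/\ i != j, incident s (edge i), incident s (edge j) &
      forall x y, x != y -> x != s -> y != s ->
        lambda_ge (lift s i j) x y (tau A l x y)].

Definition Lverts G s : {set 'I_(size G)} := [set i | incident s (edge i)].

Definition independent_L G s A l (I : {set 'I_(size G)}) : Prop :=
  I \subset Lverts G s /\
  forall i j, i \in I -> j \in I -> ~ admissible s A l i j.

Definition maximal_independent_L G s A l (I : {set 'I_(size G)}) : Prop :=
  independent_L s A l I /\
  forall J, independent_L s A l J -> I \subset J -> J = I.

Definition deg G x := #|[set i : 'I_(size G) | incident x (edge i)]|.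

Definition delta G (D : {set V}) : {set 'I_(size G)} :=
  [set i | ((edge i).1 \in D) (+) ((edge i).2 \in D)].

Definition dangerous G s (A : {set V}) (l : nat) (D : {set V}) : Prop :=
  [/\ s \notin D, [exists v, (v \in D) && (v \in A)],
      [exists v, [&& v \notin D, v != s & v \in A]] &
      #|delta G D| <= l.+1].

End Graphs.

(* Main.v *)
Require Import Defs.
From mathcomp Require Import all_boot zify.
Set Implicit Arguments. Unset Strict Implicit. Unset Printing Implicit Defensive.

Section H.
Variable V : finType.
Implicit Types (G H : seq (V * V)) (D : {set V}).

Definition cross D (e : V * V) := (e.1 \in D) (+) (e.2 \in D).

Lemma card_count (T : finType) (p : pred T) : #|[set i | p i]| = count p (enum T).
Proof. rewrite cardsE cardE /enum_mem size_filter count_filter; apply: eq_count => i /=; by rewrite andbT. Qed.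

Lemma delta_count H D : #|delta H D| = count (cross D) H.
Proof.
rewrite /delta card_count.
have E := map_tnth_enum (in_tuple H); rewrite /= in E.
rewrite -[in RHS]E count_map.
by apply: eq_count.
Qed.

Lemma cross_path H D es vs x : size vs = size es -> x \in D -> last x vs \notin D ->
  all (fun t => joins (edge t.1) t.2.1 t.2.2) (zip es (zip (x :: vs) vs)) ->
  exists2 e, e \in es & e \in delta H D.
Proof.
elim: es vs x => [|e es IH] [|v vs] x //=.
- by move=> _ ->.
- case=> Hs xD lv /andP[J Hall].
  case vD: (v \in D).
  + have [e' e'es e'd] := IH vs v Hs vD lv Hall.
    by exists e' => //; rewrite inE e'es orbT.
  + exists e; first by rewrite inE eqxx.
    rewrite inE; move: J; rewrite /joins => /orP[]/andP[]/eqP-> /eqP->;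
      by rewrite xD vD.
Qed.

Lemma lambda_cut H D x y k : lambda_ge H x y k -> x \in D -> y \notin D ->
  k <= #|delta H D|.
Proof.
case=> ps [Hsz Hp Hd] xD yD.
have: forall i : 'I_k, exists e, (e \in nth [::] ps i) && (e \in delta H D).
  move=> i.
  have /Hp [vs [H1 H2 H3 H4]] : nth [::] ps i \in ps by apply: mem_nth; rewrite Hsz.
  have lv : last x vs \notin D by rewrite H2.
  have [e ? ?] := @cross_path H D _ vs x H1 xD lv H4.
  by exists e; apply/andP.
case/fin_all_exists=> f Hf.
have inj : injective f.
  move=> i j Eij; apply/eqP; apply/negPn/negP=> nij.
  have /andP[fi _] := Hf i.
  have /andP[fj _] := Hf j.
  case: (ltngtP i j) => [lt|lt|/val_inj eq]; last by rewrite eq eqxx in nij.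
  - by move: (Hd i j (introT andP (conj lt (ltn_ord j))) (f i) fi); rewrite Eij fj.
  - by move: (Hd j i (introT andP (conj lt (ltn_ord i))) (f j) fj); rewrite -Eij fi.
have <- : #|[set f i | i in 'I_k]| = k by rewrite card_imset // card_ord.
apply: subset_leq_card; apply/subsetP=> e /imsetP[i _ ->].
by case/andP: (Hf i).
Qed.

Lemma lift_delta G s (i j : 'I_(size G)) D : i != j -> cross D (edge i) -> cross D (edge j) ->
  ~~ cross D (other s (edge i), other s (edge j)) ->
  #|delta (Defs.lift s i j) D| + 2 = #|delta G D|.
Proof.
move=> nij ci cj cn.
rewrite !delta_count /Defs.lift count_cat /= (negbTE cn) count_map count_filter.
set c := count _ (enum _).
have -> : c = #|[set k | cross D (edge (G:=G) k)] :&: [set k | (k != i) && (k != j)]|.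
  rewrite card_count /c; apply: eq_count => k; by rewrite !inE.
have -> : count (cross D) G = #|[set k | cross D (edge (G:=G) k)]|.
  rewrite -delta_count; congr #|_|; apply/setP => k; by rewrite !inE.
rewrite -(cardsID [set k | (k != i) && (k != j)] [set k | cross D (edge (G:=G) k)]).
rewrite addn0 -addnA; congr (_ + _).
have -> : [set k | cross D (edge (G:=G) k)] :\: [set k | (k != i) && (k != j)] = [set i; j].
  apply/setP=> k; rewrite !inE.
  case: (eqVneq k i) => [->|ki]; first by rewrite ci.
  case: (eqVneq k j) => [->|kj]; first by rewrite cj.
  by [].
by rewrite cards2 nij.
Qed.

Definition pairP (P Q : {set V}) (e : V * V) :=
  ((e.1 \in P) && (e.2 \in Q)) || ((e.2 \in P) && (e.1 \in Q)).

Lemma inc_pair s (P Q : {set V}) e : incident s e -> s \in Q -> other s e \in P -> pairP P Q e.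
Proof.
case: e => a b; rewrite /incident /other /pairP /=.
case: (eqVneq a s) => [->|ane] /=.
  by move=> _ -> ->; rewrite orbT.
by move=> /eqP -> -> ->.
Qed.

Lemma inc_cross s D e : incident s e -> s \notin D -> other s e \in D -> cross D e.
Proof.
case: e => a b; rewrite /incident /other /cross /=.
case: (eqVneq a s) => [->|ane] /=.
  by move=> _ /negbTE -> ->.
by move=> /eqP -> /negbTE -> ->.
Qed.

Lemma other_A s (A : {set V}) e : ((e.1 \in A) || (e.2 \in A)) -> s \notin A ->
  incident s e -> other s e \in A.
Proof.
case: e => a b; rewrite /incident /other /=.
case: (eqVneq a s) => [->|ane] /=.
  by move=> /orP[] // sA /negbTE; rewrite sA.
by move=> /orP[] // bA sA /eqP bs; move: bA; rewrite bs (negbTE sA).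
Qed.

Lemma card_edges H (p : pred (V * V)) :
  #|[set k : 'I_(size H) | p (edge k)]| = count p H.
Proof.
rewrite card_count.
have E := map_tnth_enum (in_tuple H); rewrite /= in E.
rewrite -[in RHS]E count_map.
by apply: eq_count.
Qed.

Lemma nonadm G s (A : {set V}) l D (i j : 'I_(size G)) : dangerous G s A l D ->
  incident s (edge i) -> incident s (edge j) ->
  other s (edge i) \in D -> other s (edge j) \in D -> ~ admissible s A l i j.
Proof.
case=> sD /existsP[a /andP[aD aA]] /existsP[b /and3P[bD bs bA]] dl ii ij oi oj.
case=> nij _ _ Hl.
have ab : a != b by apply: contraNneq bD => <-.
have ane : a != s by apply: contraNneq sD => <-.
have := Hl a b ab ane bs; rewrite /tau aA bA /= => Hab.
have := @lambda_cut _ D a b l Hab aD bD.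
have := @lift_delta G s i j D nij (@inc_cross s D _ ii sD oi) (@inc_cross s D _ ij sD oj).
rewrite /cross /= oi oj /= => /(_ isT) E.
move: dl; rewrite -E addn2 ltnS => h1 h2; have := leq_trans h1 h2; by rewrite ltnn.
Qed.

Definition ED G s (D : {set V}) : {set 'I_(size G)} :=
  [set i | incident s (edge i) && (other s (edge i) \in D)].

Lemma ED_indep G s A l D (J : {set 'I_(size G)}) : dangerous G s A l D ->
  J \subset ED G s D -> independent_L s A l J.
Proof.
move=> dD /subsetP sJ; split.
  by apply/subsetP => i /sJ; rewrite !inE => /andP[].
move=> i j /sJ; rewrite inE => /andP[ii oi] /sJ; rewrite inE => /andP[ij oj].
exact: nonadm dD ii ij oi oj.
Qed.

Lemma absorb G s A l D (I : {set 'I_(size G)}) e :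
  maximal_independent_L s A l I -> dangerous G s A l D ->
  (forall i, i \in I -> other s (edge i) \in D) ->
  e \in Lverts G s -> other s (edge e) \in D -> e \in I.
Proof.
case=> [[/subsetP IL _] mx] dD HI eL oe.
have J : independent_L s A l (e |: I).
  apply: (@ED_indep G s A l D (e |: I) dD); apply/subsetP => i; rewrite !inE.
  case/orP => [/eqP ->|iI]; first by move: eL; rewrite inE => ->.
  by rewrite HI // andbT; move: (IL i iI); rewrite inE.
have := mx _ J (subsetUr _ _) => E.
by rewrite -E setU11.
Qed.

Section Count.
Variables D1 D2 : {set V}.
Let X := D1 :\: D2.
Let Y := D2 :\: D1.
Let Z := D1 :&: D2.
Let U := D1 :|: D2.
Let zo := pairP Z (~: U).
Let xy := pairP X Y.
Let xz := pairP X Z.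
Let zy := pairP Z Y.

Lemma pe e :
  [/\ cross D1 e + cross D2 e = cross X e + cross Y e + 2 * zo e,
      cross D1 e + cross D2 e = cross Z e + cross U e + 2 * xy e,
      cross D1 e + xz e = cross X e + zy e + zo e &
      (cross Z e : nat) = xz e + zy e + zo e].
Proof.
rewrite /zo /xy /xz /zy /pairP /cross /X /Y /Z /U !inE.
by case: (e.1 \in D1); case: (e.1 \in D2); case: (e.2 \in D1); case: (e.2 \in D2).
Qed.

Lemma counts H :
  [/\ count (cross D1) H + count (cross D2) H = count (cross X) H + count (cross Y) H + 2 * count zo H,
      count (cross D1) H + count (cross D2) H = count (cross Z) H + count (cross U) H + 2 * count xy H,
      count (cross D1) H + count xz H = count (cross X) H + count zy H + count zo H &
      count (cross Z) H = count xz H + count zy H + count zo H].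
Proof.
elim: H => [|e H [IH1 IH2 IH3 IH4]] //=.
have [P1 P2 P3 P4] := pe e.
split; lia.
Qed.
End Count.
End H.

Lemma arith1 l d1 d2 dX dY zo c : d1 <= l.+1 -> d2 <= l.+1 -> l <= dX -> l <= dY ->
  c <= zo -> d1 + d2 = dX + dY + 2 * zo -> c <= 1.
Proof. lia. Qed.

Lemma arith2 l d1 d2 dX dY dZ dU zo xy xz zy : d1 <= l.+1 -> d2 <= l.+1 -> l <= dX -> l <= dY ->
  l <= dZ -> l.+2 <= dU -> 1 <= zo ->
  d1 + d2 = dX + dY + 2 * zo -> d1 + d2 = dZ + dU + 2 * xy ->
  d1 + xz = dX + zy + zo -> dZ = xz + zy + zo -> l = (l./2).*2 -> False.
Proof. move=> *; lia. Qed.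

Unset Implicit Arguments.

Theorem proposition4p6 (V : finType) (G : seq (V * V)) (l : nat) (s : V)
    (A : {set V}) (I1 I2 : {set 'I_(size G)}) (D1 D2 : {set V}) :
  loopless G ->
  4 <= l ->
  A \proper [set: V] ->
  s \notin A ->
  (forall x y, x \in A -> y \in A -> x != y -> lambda_ge G x y l) ->
  (forall i : 'I_(size G), ((edge i).1 \in A) || ((edge i).2 \in A)) ->
  4 <= deg G s ->
  maximal_independent_L s A l I1 -> maximal_independent_L s A l I2 ->
  I1 != I2 -> 2 <= #|I1| -> 2 <= #|I2| ->
  dangerous G s A l D1 -> dangerous G s A l D2 ->
  (forall i, i \in I1 -> other s (edge i) \in D1) ->
  (forall i, i \in I2 -> other s (edge i) \in D2) ->
  #|I1 :&: I2| <= 1 /\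
  (#|I1 :&: I2| = 1 -> I1 :|: I2 != Lverts G s -> odd l).
Proof.
move=> _ _ _ sA Hlam HA _ M1 M2 n12 _ _ Dd1 Dd2 HI1 HI2.
have M1' := M1; have M2' := M2.
case: M1 => [ind1 mx1]; case: M2 => [ind2 mx2].
have [L1 _] := ind1; have [L2 _] := ind2.
have sD1 : s \notin D1 by case: Dd1.
have sD2 : s \notin D2 by case: Dd2.
have nsub12 : ~~ (I1 \subset I2).
  apply/negP => sub; have E := mx1 I2 ind2 sub; by rewrite E eqxx in n12.
have nsub21 : ~~ (I2 \subset I1).
  apply/negP => sub; have E := mx2 I1 ind1 sub; by rewrite E eqxx in n12.
have [e1 e1I1 e1nI2] := subsetPn nsub12.
have [e2 e2I2 e2nI1] := subsetPn nsub21.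
have e1L : e1 \in Lverts G s by apply: (subsetP L1).
have e2L : e2 \in Lverts G s by apply: (subsetP L2).
have o1D1 := HI1 e1 e1I1.
have o2D2 := HI2 e2 e2I2.
have o1nD2 : other s (edge e1) \notin D2.
  apply/negP => /(absorb M2' Dd2 HI2 e1L); by rewrite (negbTE e1nI2).
have o2nD1 : other s (edge e2) \notin D1.
  apply/negP => /(absorb M1' Dd1 HI1 e2L); by rewrite (negbTE e2nI1).
have incA : forall e, e \in Lverts G s -> other s (edge e) \in A.
  move=> e; rewrite inE => ie; exact: other_A (HA e) sA ie.
have o1A := incA _ e1L.
have o2A := incA _ e2L.
have n12v : other s (edge e1) != other s (edge e2).
  by apply: contraNneq o2nD1 => <-.
have dX : l <= count (cross (D1 :\: D2)) G.
  rewrite -delta_count; apply: (lambda_cut (Hlam _ _ o1A o2A n12v)).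
    by rewrite !inE o1nD2 o1D1.
  by rewrite !inE o2D2.
have dY : l <= count (cross (D2 :\: D1)) G.
  rewrite -delta_count; have n21v : other s (edge e2) != other s (edge e1) by rewrite eq_sym.
  apply: (lambda_cut (Hlam _ _ o2A o1A n21v)).
    by rewrite !inE o2nD1 o2D2.
  by rewrite !inE o1D1.
have d1 : count (cross D1) G <= l.+1 by rewrite -delta_count; case: Dd1.
have d2 : count (cross D2) G <= l.+1 by rewrite -delta_count; case: Dd2.
have zoI : #|I1 :&: I2| <= count (pairP (D1 :&: D2) (~: (D1 :|: D2))) G.
  rewrite -card_edges; apply: subset_leq_card; apply/subsetP => k.
  rewrite !inE => /andP[kI1 kI2].
  have := subsetP L1 k kI1; rewrite inE => ik.
  apply: (inc_pair ik); first by rewrite !inE negb_or sD1 sD2.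
  by rewrite !inE HI1 ?HI2.
have [C1 C2 C3 C4] := counts D1 D2 G.
split; first by apply: (arith1 d1 d2 dX dY zoI C1).
move=> c1 nU.
have /card_gt0P [e0 e0in] : 0 < #|I1 :&: I2| by rewrite c1.
move: e0in; rewrite inE => /andP[e0I1 e0I2].
have e0L : e0 \in Lverts G s by apply: (subsetP L1).
have o0A := incA _ e0L.
have o0Z : other s (edge e0) \in D1 :&: D2 by rewrite inE HI1 ?HI2.
have dZ : l <= count (cross (D1 :&: D2)) G.
  have n01v : other s (edge e0) != other s (edge e1).
    by apply: contraNneq o1nD2 => <-; move: o0Z; rewrite inE => /andP[].
  rewrite -delta_count; apply: (lambda_cut (Hlam _ _ o0A o1A n01v)) => //.
  by rewrite !inE (negbTE o1nD2) andbF.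
have : ~~ (Lverts G s \subset I1 :|: I2).
  apply/negP => sub; move: nU; rewrite eqEsubset sub andbT.
  by rewrite subUset L1 L2.
case/subsetPn => f fL; rewrite inE negb_or => /andP[fnI1 fnI2].
have ofnD1 : other s (edge f) \notin D1.
  apply/negP => /(absorb M1' Dd1 HI1 fL); by rewrite (negbTE fnI1).
have ofnD2 : other s (edge f) \notin D2.
  apply/negP => /(absorb M2' Dd2 HI2 fL); by rewrite (negbTE fnI2).
have ofA := incA _ fL.
have dU : l.+2 <= count (cross (D1 :|: D2)) G.
  rewrite -delta_count ltnNge; apply/negP => h.
  have dD : dangerous G s A l (D1 :|: D2).
    split.
    - by rewrite !inE negb_or sD1 sD2.
    - by apply/existsP; exists (other s (edge e1)); rewrite !inE o1D1 o1A.
    - apply/existsP; exists (other s (edge f)); rewrite !inE negb_or ofnD1 ofnD2 ofA /=.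
      rewrite andbT; by apply: contraTneq ofA => ->.
    - exact: h.
  have HIU : forall i, i \in I1 -> other s (edge i) \in D1 :|: D2.
    by move=> i /HI1; rewrite inE => ->.
  move/negP: nsub21; apply; apply/subsetP => e eI2.
  apply: (absorb M1' dD HIU); first exact: (subsetP L2).
  by rewrite inE HI2 ?orbT.
apply/negPn/negP => ev.
have := odd_double_half l; rewrite (negbTE ev) add0n => Hl2.
have zo1 : 1 <= count (pairP (D1 :&: D2) (~: (D1 :|: D2))) G by rewrite -c1.
exact: (arith2 d1 d2 dX dY dZ dU zo1 C1 C2 C3 C4 (esym Hl2)).
Qed.
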